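(* A morphism in $\mathbf{MetCH_{sep}}$ is a regular monomorphism if and only if it is an embedding.
   Context: A metric on a set $X$ is a map $d\colon X\times X\to[0,\infty]$ with $d(x,x)=0$ and $d(x,z)\le d(x,y)+d(y,z)$ (not necessarily symmetric, $\infty$ allowed); separated means $d(x,y)=0=d(y,x)$ implies $x=y$. A separated metric compact Hausdorff space is a compact Hausdorff space with a separated metric $d\colon X\times X\to[0,\infty]$ continuous with respect to the upper topology on $[0,\infty]$ (open sets $]u,\infty]$, plus $\emptyset$ and $[0,\infty]$). $\mathbf{MetCH_{sep}}$ has these spaces as objects and continuous non-expansive maps ($d_Y(f(x),f(y))\le d_X(x,y)$) as morphisms. An embedding is an injective morphism $f\colon X\to Y$ with $d_X(x,y)=d_Y(f(x),f(y))$ for all $x,y\in X$. *)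

(* Defs.v *)
From HB Require Import structures.
From mathcomp Require Import all_boot all_order all_algebra.
From mathcomp Require Import all_classical all_reals topology.
Set Implicit Arguments. Unset Strict Implicit. Unset Printing Implicit Defensive.
Import Order.TTheory GRing.Theory Num.Theory.
Local Open Scope classical_set_scope.
Local Open Scope ring_scope.
Local Open Scope ereal_scope.

Record MetCH (R : realType) := {
  carrier :> topologicalType ;
  dist : carrier -> carrier -> \bar R ;
  dist_ge0 : forall x y, 0 <= dist x y ;
  dist_refl : forall x, dist x x = 0 ;
  dist_triangle : forall x y z, dist x z <= dist x y + dist y z ;
  dist_separated : forall x y, dist x y = 0 -> dist y x = 0 -> x = y ;
  carrier_compact : compact [set: carrier] ;
  carrier_hausdorff : hausdorff_space carrier ;
  (* continuity of d : X x X -> [0,oo] for the upper topology on [0,oo],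
     whose nontrivial opens are ]u, oo], u in [0, oo] *)
  dist_upper_cont : forall u : \bar R, 0 <= u ->
     open [set p : carrier * carrier | u < dist p.1 p.2]
}.

Arguments dist {R} _ _ _.
Record MetCHHom (R : realType) (X Y : MetCH R) := {
  hom_fun :> X -> Y ;
  hom_cont : continuous hom_fun ;
  hom_nonexp : forall x y, dist Y (hom_fun x) (hom_fun y) <= dist X x y
}.

Definition regular_mono (R : realType) (X Y : MetCH R) (f : MetCHHom X Y) :=
  exists (Z : MetCH R) (g h : MetCHHom Y Z),
    (g \o f = h \o f)%FUN /\
    forall (W : MetCH R) (k : MetCHHom W Y), (g \o k = h \o k)%FUN ->
      exists u : MetCHHom W X,
        (f \o u = k)%FUN /\
        forall u' : MetCHHom W X, (f \o u' = k)%FUN -> (u' : W -> X) = u.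

Definition embedding (R : realType) (X Y : MetCH R) (f : MetCHHom X Y) :=
  injective f /\ forall x y, dist X x y = dist Y (f x) (f y).

(* Main.v *)
Require Import Defs.
From HB Require Import structures.
From mathcomp Require Import all_boot all_order all_algebra.
From mathcomp Require Import all_classical all_reals topology.
From mathcomp Require Import ereal generic_quotient.
From mathcomp Require Import lra.
Set Implicit Arguments. Unset Strict Implicit. Unset Printing Implicit Defensive.
Import Order.TTheory GRing.Theory Num.Theory.
Local Open Scope classical_set_scope.
Local Open Scope ring_scope.
Local Open Scope ereal_scope.

Definition pt := unit.
HB.instance Definition _ := Choice.on pt.
HB.instance Definition _ := hasNbhs.Build pt principal_filter.
HB.instance Definition _ := Discrete_ofNbhs.Build pt erefl.

Section Easy.
Context (R : realType).

Definition ptM : MetCH R.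
refine (@Build_MetCH R pt (fun _ _ => 0) _ _ _ _ _ _ _).
- by move=> _ _; exact: le_refl.
- by [].
- by move=> _ _ _; rewrite adde0.
- by move=> [] [].
- apply: finite_compact; apply: (@sub_finite_set _ _ [set tt]) => //.
  by case.
- by move=> [] [].
- move=> u u0; rewrite (_ : [set _ | _] = set0); first exact: open0.
  by apply/seteqP; split => // p /=; rewrite ltNge u0.
Defined.

Definition cstHom (W X : MetCH R) (x : X) : MetCHHom W X.
refine (@Build_MetCHHom R W X (fun _ => x) _ _).
- exact: cst_continuous.
- by move=> a b; rewrite dist_refl dist_ge0.
Defined.
Lemma open_pre2 (T U : topologicalType) (f g : T -> U) (S : set (U * U)) :
  continuous f -> continuous g -> open S -> open [set p : T * T | S (f p.1, g p.2)].
Proof.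
move=> cf cg; rewrite !openE => oS p /oS [[P Q] [/= P1 Q2] PQS].
exists (f @^-1` P, g @^-1` Q); first by split; [apply: cf|apply: cg].
by move=> [a b] [/= Pa Qb]; apply: PQS.
Qed.

Definition pullM (X Y : MetCH R) (f : MetCHHom X Y) (finj : injective f) : MetCH R.
refine (@Build_MetCH R X (fun a b => dist Y (f a) (f b)) _ _ _ _
   (@carrier_compact _ X) (@carrier_hausdorff _ X) _).
- by move=> a b; exact: dist_ge0.
- by move=> a; exact: dist_refl.
- by move=> a b c; exact: dist_triangle.
- by move=> a b h1 h2; apply: finj; exact: dist_separated.
- by move=> u u0; exact (open_pre2 (@hom_cont _ _ _ f) (@hom_cont _ _ _ f) (dist_upper_cont u0)).
Defined.

Lemma reg_emb (X Y : MetCH R) (f : MetCHHom X Y) : regular_mono f -> embedding f.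
Proof.
case=> Z [g [h [gh univ]]].
have finj : injective f.
  move=> x1 x2 fx.
  have kgh : (g \o cstHom ptM (f x1) = h \o cstHom ptM (f x1))%FUN.
    by apply: funext => _ /=; exact: (congr1 (fun F => F x1) gh).
  case: (univ _ _ kgh) => u [_ uniq].
  have e1 := uniq (cstHom ptM x1) (funext (fun _ => erefl)).
  have e2 : (cstHom ptM x2 : ptM -> X) = u.
    by apply: uniq; apply: funext => _ /=; rewrite fx.
  by have := congr1 (fun F => F tt) (etrans e1 (esym e2)).
split; first by []. move=> a b.
pose k := @Build_MetCHHom R (pullM finj) Y f (@hom_cont _ _ _ f) (fun _ _ => le_refl _).
have kgh : (g \o k = h \o k)%FUN by [].
case: (univ _ _ kgh) => u [fu _].
have uE c : u c = c by apply: (finj); exact: (congr1 (fun F => F c) fu).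
apply/eqP; rewrite eq_le hom_nonexp andbT.
by have := hom_nonexp u a b; rewrite !uE.
Qed.
End Easy.

Local Open Scope quotient_scope.
Lemma dist_lsc (R : realType) (Y : MetCH R) (r : R) (y0 y1 : Y) :
  r%:E < dist Y y0 y1 -> \forall y \near y0 & y' \near y1, r%:E < dist Y y y'.
Proof.
move=> H.
have [r0|r0] := ltP r 0%R.
  apply: filterE => p; apply: (lt_le_trans _ (@dist_ge0 _ Y p.1 p.2)); by rewrite lte_fin.
have := @dist_upper_cont _ Y r%:E; rewrite lee_fin => /(_ r0).
by rewrite openE => /(_ (y0, y1) H).
Qed.

Lemma split_lt (R : realType) (r : R) (x y : \bar R) : 0 <= x -> 0 <= y ->
  r%:E < x + y -> exists s t : R, [/\ s%:E < x, t%:E < y & (r < s + t)%R].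
Proof.
case: x => [a| |] // ; case: y => [b| |] //.
- move=> _ _; rewrite -EFinD lte_fin => H.
  exists (a - (a + b - r) / 3)%R, (b - (a + b - r) / 3)%R.
  by split; rewrite ?lte_fin; lra.
- move=> a0 _ _; exists (a - 1)%R, (r - a + 2)%R; split; rewrite ?ltry ?lte_fin //; lra.
- move=> _ b0 _; exists (r - b + 2)%R, (b - 1)%R; split; rewrite ?ltry ?lte_fin //; lra.
- move=> _ _ _; exists (r + 2)%R, (-1)%R; split; rewrite ?ltry //; lra.
Qed.

Section Push.
Context (R : realType) (Y : MetCH R) (A : set Y) (cA : compact A).
Local Notation d := (dist Y).
Local Notation S := {b : bool & (Y : topologicalType)}.

Definition E (y y' : Y) : \bar R := ereal_inf [set d y a + d a y' | a in A].

Lemma E_ge0 y y' : 0 <= E y y'.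
Proof. by apply: le_ereal_inf_tmp => _ [a _ <-]; rewrite adde_ge0 ?dist_ge0. Qed.

Lemma d_le_E y y' : d y y' <= E y y'.
Proof. by apply: le_ereal_inf_tmp => _ [a _ <-]; exact: dist_triangle. Qed.

Lemma E_le y y' a : A a -> E y y' <= d y a + d a y'.
Proof. by move=> Aa; apply: ereal_inf_lbound; exists a. Qed.

Lemma E_Al y y' : A y -> E y y' = d y y'.
Proof.
move=> Ay; apply/eqP; rewrite eq_le d_le_E andbT.
by apply: le_trans (E_le _ _ Ay) _; rewrite dist_refl add0e.
Qed.

Lemma E_Ar y y' : A y' -> E y y' = d y y'.
Proof.
move=> Ay; apply/eqP; rewrite eq_le d_le_E andbT.
by apply: le_trans (E_le _ _ Ay) _; rewrite dist_refl adde0.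
Qed.

Lemma fin_dist (x y : Y) : d x y != +oo -> d x y \is a fin_num.
Proof. by move=> H; rewrite ge0_fin_numE ?dist_ge0 // lt_neqAle H leey. Qed.

Lemma E_tril x y z : E x z <= d x y + E y z.
Proof.
have [->|/fin_dist fin] := eqVneq (d x y) +oo.
  by rewrite addye ?leey // gt_eqF // (lt_le_trans _ (E_ge0 _ _)) // ltNy0.
rewrite -leeBlDl //; apply: le_ereal_inf_tmp => _ [a Aa <-].
rewrite leeBlDl // addeA; apply: le_trans (E_le _ _ Aa) _.
by apply: leeD => //; exact: dist_triangle.
Qed.

Lemma E_trir x y z : E x z <= E x y + d y z.
Proof.
have [->|/fin_dist fin] := eqVneq (d y z) +oo.
  by rewrite addey ?leey // gt_eqF // (lt_le_trans _ (E_ge0 _ _)) // ltNy0.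
rewrite -leeBlDr //; apply: le_ereal_inf_tmp => _ [a Aa <-].
rewrite leeBlDr // -addeA; apply: le_trans (E_le _ _ Aa) _.
by apply: leeD => //; exact: dist_triangle.
Qed.
Lemma E_lsc (r : R) y0 y1 : r%:E < E y0 y1 ->
  \forall y \near y0 & y' \near y1, r%:E < E y y'.
Proof.
move=> H.
have [r' [rr' r'E]] : exists r' : R, (r < r')%R /\ r'%:E < E y0 y1.
  move: H; case E0: (E y0 y1) => [e| |] //.
    rewrite lte_fin => re; exists ((r + e) / 2)%R; split; rewrite ?lte_fin; lra.
  by move=> _; exists (r + 1)%R; split; rewrite ?ltry //; lra.
have HQ : \forall i \near nbhs (y0, y1), A `<=` (fun a => r'%:E < d i.1 a + d a i.2).
  apply: ((compact_near_coveringP A).1 cA (Y * Y)%type (nbhs (y0, y1))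
    (fun i a => r'%:E < d i.1 a + d a i.2)).
  move=> a Aa.
  have := lt_le_trans r'E (E_le _ _ Aa).
  case/split_lt; rewrite ?dist_ge0 // => s [t [st1 st2 st3]].
  case: (dist_lsc st1) => [[U1 V1] [/= U1y0 V1a] h1].
  case: (dist_lsc st2) => [[V2 W2] [/= V2a W2y1] h2].
  exists (V1 `&` V2, U1 `*` W2).
    by split; [exact: filterI | exists (U1, W2)].
  move=> [a' i] [/= [V1a' V2a'] [U1i W2i]] /=.
  apply: lt_trans (_ : (s + t)%:E < _); first by rewrite lte_fin.
  rewrite EFinD; apply: lteD.
    by apply: (h1 (i.1, a')).
  by apply: (h2 (a', i.2)).
  suff : nbhs (y0, y1) [set i | r%:E < E i.1 i.2] by [].
apply: filterS HQ => i /= Pi.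
  apply: (@lt_le_trans _ _ r'%:E); first by rewrite lte_fin.
  by apply: le_ereal_inf_tmp => _ [a Aa <-]; apply: ltW; exact: Pi.
Qed.
Lemma E_pos y : ~ A y -> 0 < E y y.
Proof.
move=> nAy.
have Fr : ProperFilter ((0%R : R)^'+) by exact: at_right_proper_filter.
have HQ : \forall r \near (0%R : R)^'+, A `<=` (fun a => r%:E < d y a + d a y).
  apply: ((compact_near_coveringP A).1 cA R (0%R : R)^'+
    (fun r a => r%:E < d y a + d a y)).
  move=> a Aa.
  have pos : 0%R%:E < d y a + d a y.
    rewrite lt_neqAle adde_ge0 ?dist_ge0 // andbT eq_sym padde_eq0 ?dist_ge0 //.
    apply/negP => /andP[/eqP h1 /eqP h2].
    by apply: nAy; rewrite (dist_separated h1 h2).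
  case/split_lt: pos; rewrite ?dist_ge0 // => s [t [st1 st2 st3]].
  case: (dist_lsc st1) => [[U1 V1] [/= U1y V1a] h1].
  case: (dist_lsc st2) => [[V2 W2] [/= V2a W2y] h2].
  exists (V1 `&` V2, [set r | (r < s + t)%R]).
    by split; [exact: filterI | exact: nbhs_right_lt].
  move=> [a' r] [/= [V1a' V2a'] rst] /=.
  apply: lt_trans (_ : (s + t)%:E < _); first by rewrite lte_fin.
  rewrite EFinD; apply: lteD.
    by apply: (h1 (y, a')); split => //; exact: nbhs_singleton.
  by apply: (h2 (a', y)); split => //; exact: nbhs_singleton.
have [r [Pr r0]] := filter_ex (filterI HQ (nbhs_right_gt (0%R : R))).
apply: (@lt_le_trans _ _ r%:E); first by rewrite lte_fin.
by apply: le_ereal_inf_tmp => _ [a Aa <-]; apply: ltW; exact: Pr.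
Qed.
Definition erel (p q : S) : bool :=
  (projT2 p == projT2 q) && ((projT1 p == projT1 q) || `[< A (projT2 p) >]).

Lemma erel_refl : reflexive erel. Proof. by move=> p; rewrite /erel !eqxx. Qed.
Lemma erel_sym : symmetric erel.
Proof.
move=> [b y] [b' y']; rewrite /erel /=.
by case: (eqVneq y y') => [<-|//]; rewrite eq_sym.
Qed.
Lemma erel_trans : transitive erel.
Proof.
move=> [bq yq] [bp yp] [br yr]; rewrite /erel /=.
case/andP => /eqP <- + /andP[/eqP <-].
case: (asboolP (A yp)) => Ap; rewrite ?orbT ?orbF //.
  by rewrite eqxx.
by move=> /eqP -> /eqP ->; rewrite !eqxx.
Qed.

Definition erelE := EquivRel _ erel_refl erel_sym erel_trans.
Definition Z := {eq_quot erelE}.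
HB.instance Definition _ := Topological.copy Z (quotient_topology Z).
HB.instance Definition _ := Quotient.on Z.

Definition mk (b : bool) (y : Y) : Z := \pi_Z (existT _ b y).
Definition py (z : Z) : Y := projT2 (repr z).
Definition cz (z : Z) : bool := projT1 (repr z) && ~~ `[< A (py z) >].

Lemma repr_mk b y : erel (repr (mk b y)) (existT _ b y).
Proof. by apply/(@eqmodP _ erelE); rewrite reprK. Qed.

Lemma py_mk b y : py (mk b y) = y.
Proof. by have := repr_mk b y; rewrite /py /erel => /andP[/eqP ->]. Qed.

Lemma cz_mk b y : cz (mk b y) = b && ~~ `[< A y >].
Proof.
rewrite /cz py_mk; have := repr_mk b y; rewrite /erel => /andP[/eqP ->].
by case: (asboolP (A y)) => Ay; rewrite ?andbF ?andbT ?orbF ?orbT // => /eqP.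
Qed.

Lemma zE z : z = mk (cz z) (py z).
Proof.
rewrite -{1}(reprK z) /mk /cz /py; apply/(@eqmodP _ erelE) => /=.
case: (repr z) => b y /=; rewrite /erel /= eqxx /=.
by case: (asboolP (A y)) => Ay; rewrite ?andbT ?andbF ?eqxx ?orbT.
Qed.

Lemma mk_A b y : A y -> mk b y = mk false y.
Proof. move=> Ay; rewrite [LHS]zE [RHS]zE !cz_mk !py_mk. by rewrite asboolT // !andbF. Qed.

Lemma mk_neq y : ~ A y -> mk true y <> mk false y.
Proof. by move=> nAy /(congr1 cz); rewrite !cz_mk asboolF. Qed.

Lemma open_Z (U : set Z) : (forall b, open [set y | U (mk b y)]) -> open U.
Proof. by move=> H; apply/sigT_openP. Qed.

Lemma py_cont : continuous py.
Proof.
apply/continuousP => V oV; apply: open_Z => b.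
suff -> : [set y | (py @^-1` V) (mk b y)] = V by [].
by apply/seteqP; split => y /=; rewrite py_mk.
Qed.

Lemma mk_cont b : continuous (mk b).
Proof.
move=> y; apply: continuous_comp; first exact: existT_continuous.
exact: pi_continuous.
Qed.

Definition N (b : bool) : set Z := [set z | cz z = b /\ ~ A (py z)].

Lemma N_open b : closed A -> open (N b).
Proof.
move=> clA; apply: open_Z => c.
suff -> : [set y | N b (mk c y)] = if c == b then ~` A else set0.
  by case: eqP => _; [exact: closed_openC | exact: open0].
apply/seteqP; split => y; rewrite /N /= cz_mk py_mk.
  case: (asboolP (A y)) => Ay [] //; rewrite andbT => <- _.
  by rewrite eqxx.
case: eqP => [<-|//] nAy; split => //.
by rewrite asboolF // andbT.
Qed.

Lemma cz_A z : A (py z) -> cz z = false.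
Proof. by move=> Az; rewrite /cz asboolT // andbF. Qed.

Lemma Z_hausdorff : closed A -> hausdorff_space Z.
Proof.
move=> clA; rewrite open_hausdorff => z w zw.
have [pzw|pzw] := eqVneq (py z) (py w).
  have czw : cz z != cz w.
    by apply: contra zw => /eqP e; rewrite [z]zE [w]zE e pzw.
  have nAz : ~ A (py z) by move=> Az; move: czw; rewrite !cz_A -?pzw ?eqxx.
  exists (N (cz z), N (cz w)); first by rewrite !inE /N /= -pzw.
  split; [exact: N_open|exact: N_open|].
  apply/eqP/seteqP; split => // u [[/= e1 _] [e2 _]].
  by move: czw; rewrite -e1 -e2 eqxx.
have := @carrier_hausdorff _ Y; rewrite open_hausdorff => /(_ _ _ pzw).
case=> [[U V] /= [Uz Vw] [oU oV UV]].
exists (py @^-1` U, py @^-1` V).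
  by move: Uz Vw; rewrite !inE.
split; [exact: (iffLR (continuousP _) py_cont)|exact: (iffLR (continuousP _) py_cont)|].
apply/eqP/seteqP; split => // u [/= Uu Vu].
by move/eqP/seteqP: UV => [+ _] => /(_ (py u)); apply.
Qed.

Definition D (z w : Z) : \bar R :=
  if cz z == cz w then d (py z) (py w) else E (py z) (py w).

Lemma D_ge0 z w : 0 <= D z w.
Proof. by rewrite /D; case: ifP => _; [exact: dist_ge0|exact: E_ge0]. Qed.

Lemma d_le_D z w : d (py z) (py w) <= D z w.
Proof. by rewrite /D; case: ifP => _; [exact: le_refl|exact: d_le_E]. Qed.

Lemma D_refl z : D z z = 0.
Proof. by rewrite /D eqxx dist_refl. Qed.

Lemma D_tri x y z : D x z <= D x y + D y z.
Proof.
rewrite /D; case: (cz x); case: (cz y); case: (cz z) => /=;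
  rewrite ?eqxx //=.
all: try exact: dist_triangle.
all: try exact: E_tril.
all: try exact: E_trir.
all: apply: le_trans (dist_triangle _ (py y) _) _; apply: leeD; exact: d_le_E.
Qed.

Lemma D_sep z w : D z w = 0 -> D w z = 0 -> z = w.
Proof.
rewrite /D [cz w == _]eq_sym; case: (eqVneq (cz z) (cz w)) => [e|ne] h1 h2.
  by rewrite [z]zE [w]zE e (dist_separated h1 h2).
have h1' : d (py z) (py w) = 0.
  by apply/eqP; rewrite eq_le dist_ge0 andbT -h1 d_le_E.
have h2' : d (py w) (py z) = 0.
  by apply/eqP; rewrite eq_le dist_ge0 andbT -h2 d_le_E.
have pe := dist_separated h1' h2'.
have nA : ~ A (py z) by move=> Az; move: ne; rewrite !cz_A -?pe ?eqxx.
by have := E_pos nA; rewrite {2}pe h1 ltxx.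
Qed.

Lemma Z_compact : compact [set: Z].
Proof.
have -> : [set: Z] = \pi_Z @` [set: S].
  by apply/seteqP; split => // z _; exists (repr z) => //; exact: reprK.
apply: continuous_compact.
  by apply: continuous_subspaceT => x; exact: pi_continuous.
apply: sigT_compact; first exact: finite_finset.
by move=> _; exact: carrier_compact.
Qed.

Lemma D_cont (clA : closed A) (u : \bar R) : 0 <= u -> open [set p : Z * Z | u < D p.1 p.2].
Proof.
move=> u0; rewrite openE => -[z w] /= H.
case: u u0 H => [r| |] //= u0 H; last by rewrite ltNge leey in H.
have [hd|hd] := ltP r%:E (d (py z) (py w)).
  case: (dist_lsc hd) => [[U V] [/= Uz Vw] hUV].
  exists (py @^-1` U, py @^-1` V); first by split; apply: py_cont.
  move=> [z' w'] [/= Uz' Vw']; apply: lt_le_trans (d_le_D z' w').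
  exact: (hUV (py z', py w')).
have czw : cz z != cz w by apply: contraTneq H => e; rewrite /D e eqxx -leNgt.
move: H; rewrite /D (negbTE czw) => H.
have nAz : ~ A (py z) by move=> Az; move: H; rewrite E_Al // ltNge hd.
have nAw : ~ A (py w) by move=> Aw; move: H; rewrite E_Ar // ltNge hd.
case: (E_lsc H) => [[U V] [/= Uz Vw] hUV].
exists (py @^-1` U `&` N (cz z), py @^-1` V `&` N (cz w)).
  split; apply: filterI; try exact: py_cont; apply: open_nbhs_nbhs;
    (split; [exact: N_open|by []]).
move=> [z' w'] [/= [Uz' [e1 _]] [Vw' [e2 _]]].
by rewrite e1 e2 (negbTE czw); exact: (hUV (py z', py w')).
Qed.

Definition ZM (clA : closed A) : MetCH R :=
  @Build_MetCH R Z D D_ge0 D_refl D_tri D_sep Z_compact (Z_hausdorff clA) (D_cont clA).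

Lemma g_nonexp y y' : D (mk false y) (mk false y') <= d y y'.
Proof. by rewrite /D !cz_mk !py_mk /=. Qed.

Lemma h_nonexp y y' : D (mk true y) (mk true y') <= d y y'.
Proof.
rewrite /D !cz_mk !py_mk /=.
case: (asboolP (A y)) => Ay; case: (asboolP (A y')) => Ay' //=.
- by rewrite (E_Al _ Ay).
- by rewrite (E_Ar _ Ay').
Qed.

Definition gH (clA : closed A) : MetCHHom Y (ZM clA) :=
  @Build_MetCHHom R Y (ZM clA) (mk false) (@mk_cont false) g_nonexp.
Definition hH (clA : closed A) : MetCHHom Y (ZM clA) :=
  @Build_MetCHHom R Y (ZM clA) (mk true) (@mk_cont true) h_nonexp.

Lemma mk_eqE y : mk false y = mk true y <-> A y.
Proof.
split; last by move=> Ay; rewrite [RHS]mk_A.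
by move=> e; apply: contrapT => nAy; exact: (mk_neq nAy (esym e)).
Qed.

End Push.

Lemma emb_reg (R : realType) (X Y : MetCH R) (f : MetCHHom X Y) :
  embedding f -> regular_mono f.
Proof.
case=> finj fd.
have cA : compact (range f).
  apply: continuous_compact; last exact: carrier_compact.
  by apply: continuous_subspaceT => x; exact: hom_cont.
have clA : closed (range f) := compact_closed (@carrier_hausdorff _ Y) cA.
exists (ZM cA clA), (gH cA clA), (hH cA clA); split.
  by apply: funext => x /=; apply/mk_eqE; exists x.
move=> W k kgh.
have hk w : exists x, f x = k w.
  have := congr1 (fun F => F w) kgh => /= /mk_eqE [x _ fx]; by exists x.
pose u w := projT1 (cid (hk w)).
have fu w : f (u w) = k w := projT2 (cid (hk w)).
have ucont : continuous u.
  apply/continuous_closedP => C clC.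
  have -> : u @^-1` C = k @^-1` (f @` C).
    apply/seteqP; split => w /=; first by move=> Cw; exists (u w).
    by case=> c Cc fc; rewrite -(finj _ _ (etrans fc (esym (fu w)))).
  apply: (iffLR (continuous_closedP _) (@hom_cont _ _ _ k)).
  apply: compact_closed (@carrier_hausdorff _ Y) _.
  apply: continuous_compact; first by apply: continuous_subspaceT => x; exact: hom_cont.
  by rewrite -[C]setTI; apply: compact_closedI => //; exact: carrier_compact.
have unonexp a b : dist X (u a) (u b) <= dist W a b.
  by rewrite fd !fu; exact: hom_nonexp.
exists (Build_MetCHHom ucont unonexp); split.
  by apply: funext => w /=; exact: fu.
move=> u' fu'; apply: funext => w /=; apply: finj.
by rewrite fu; exact: (congr1 (fun F => F w) fu').
Qed.

Theorem proposition4p5 (R : realType) (X Y : MetCH R) (f : MetCHHom X Y) :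
  regular_mono f <-> embedding f.
Proof. by split; [exact: reg_emb | exact: emb_reg]. Qed.
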